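(* Let $G$ be a finite group and $\mathcal{P}$ a prime ideal of $\mathrm{Gh}(\underline{A}_G)$ with $\mathcal{P}(G/e)=(p)\subseteq\mathbb{Z}$, where $p$ is a prime or $0$. For $I\le G$ let $p_I\ge0$ be the integer with $\mathcal{P}(G/G)=\widetilde{A}(G)\cap\prod_{I\le G}p_I\mathbb{Z}$. Then $\mathscr{F}(\mathcal{P})=\{I\le G: p_I\ne1\}$ is a nonempty family of subgroups of $G$.
   Context: A family of subgroups of $G$ is a nonempty set of subgroups closed under conjugation and passing to subgroups. For $H\le G$, $\widetilde{A}(H)$ is the subring of $\prod_{I\le H}\mathbb{Z}$ of tuples $(a_I)_{I\le H}$ with $a_{hIh^{-1}}=a_I$ for $h\in H$ (so $\widetilde{A}(e)=\mathbb{Z}$). $\mathrm{Gh}(\underline{A}_G)$ is the $G$-Tambara functor with $\mathrm{Gh}(\underline{A}_G)(G/H)=\widetilde{A}(H)$ and, for $H\le K$, $g\in G$, $I^g=g^{-1}Ig$: $\mathrm{res}^K_H(b)_L=b_L$; $\mathrm{tr}^K_H(a)_I=\sum_{kH\in K/H,\ I^k\le H}a_{I^k}$; $\mathrm{nm}^K_H(a)_I=\prod_{IgH\in I\backslash K/H}a_{I^g\cap H}$; $c_{g,H}(a)_J=a_{J^g}$ for $J\le gHg^{-1}$. A Tambara ideal is a collection of ideals $\mathcal{I}(G/H)$ closed under all restrictions, transfers, norms and conjugations; it is prime (Nakaoka) if it is not everything and whenever $a\in T(G/K_1)$, $b\in T(G/K_2)$ satisfy $\big(\mathrm{nm}^L_{g_1H_1g_1^{-1}}c_{g_1,H_1}\mathrm{res}^{K_1}_{H_1}(a)\big)\big(\mathrm{nm}^L_{g_2H_2g_2^{-1}}c_{g_2,H_2}\mathrm{res}^{K_2}_{H_2}(b)\big)\in\mathcal{I}(G/L)$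 for all $L,H_1,H_2\le G$, $g_1,g_2\in G$ with $H_i\le K_i$, $g_iH_ig_i^{-1}\le L$, then $a\in\mathcal{I}(G/K_1)$ or $b\in\mathcal{I}(G/K_2)$. *)

(* Defs.v *)
From mathcomp Require Import all_boot all_order all_algebra all_fingroup.
Set Implicit Arguments. Unset Strict Implicit. Unset Printing Implicit Defensive.
Import GRing.Theory.
Local Open Scope ring_scope.

(* For H <= G, Gh(G/H) = Atilde(H) is modelled as the set of finite functions
   a : {set gT} -> int which vanish off the subgroups of H and satisfy
   a (I :^ h) = a I for I <= H, h in H.  Here I :^ g = g^-1 I g = I^g. *)

Section Ghost.
Variable gT : finGroupType.
Notation elt := {ffun {set gT} -> int}.

Definition subgrp (H I : {set gT}) : bool := group_set I && (I \subset H).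

Definition Atilde (H : {set gT}) (a : elt) : Prop :=
  (forall I, ~~ subgrp H I -> a I = 0) /\
  (forall I h, subgrp H I -> h \in H -> a (I :^ h)%g = a I).

Definition zeroF : elt := [ffun _ => 0].
Definition addF (a b : elt) : elt := [ffun I => a I + b I].
Definition oppF (a : elt) : elt := [ffun I => - a I].
Definition mulF (a b : elt) : elt := [ffun I => a I * b I].

Definition resG (H : {set gT}) (b : elt) : elt :=
  [ffun L => if subgrp H L then b L else 0].

Definition trG (K H : {set gT}) (a : elt) : elt :=
  [ffun I => if subgrp K I then
     \sum_(C in lcosets H K)
        (if (I :^ repr C)%g \subset H then a (I :^ repr C)%g else 0)
   else 0].

(* nm^K_H (a)_I = prod_{IgH in I\K/H} a_{I^g cap H}  for I <= K *)
Definition nmG (K H : {set gT}) (a : elt) : elt :=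
  [ffun I => if subgrp K I then
     \prod_(D in [set (I * (g *: H))%g | g in K])
        a ((I :^ repr D) :&: H)%g
   else 0].

Definition conjG (g : gT) (H : {set gT}) (a : elt) : elt :=
  [ffun J => if subgrp (H :^ g^-1)%g J then a (J :^ g)%g else 0].

Definition is_ideal (H : {set gT}) (J : elt -> Prop) : Prop :=
  [/\ (forall a, J a -> Atilde H a),
      J zeroF,
      (forall a b, J a -> J b -> J (addF a b)),
      (forall a, J a -> J (oppF a)) &
      (forall a b, Atilde H b -> J a -> J (mulF b a))].

(* Tambara ideal of Gh(A_G): P H is the ideal P(G/H), for H <= G *)
Definition tambara_ideal (G : {set gT}) (P : {set gT} -> elt -> Prop) : Prop :=
  [/\ (forall H, subgrp G H -> is_ideal H (P H)),
      (forall K H a, subgrp G K -> subgrp K H -> P K a -> P H (resG H a)),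
      (forall K H a, subgrp G K -> subgrp K H -> P H a -> P K (trG K H a)),
      (forall K H a, subgrp G K -> subgrp K H -> P H a -> P K (nmG K H a)) &
      (forall H g a, subgrp G H -> g \in G -> P H a ->
          P (H :^ g^-1)%g (conjG g H a))].

(* Nakaoka prime Tambara ideal *)
Definition prime_tambara_ideal (G : {set gT}) (P : {set gT} -> elt -> Prop) : Prop :=
  [/\ tambara_ideal G P,
      (exists H a, [/\ subgrp G H, Atilde H a & ~ P H a]) &
      (forall K1 K2 a b, subgrp G K1 -> subgrp G K2 -> Atilde K1 a -> Atilde K2 b ->
         (forall L H1 H2 g1 g2, subgrp G L -> subgrp K1 H1 -> subgrp K2 H2 ->
            g1 \in G -> g2 \in G ->
            (H1 :^ g1^-1)%g \subset L -> (H2 :^ g2^-1)%g \subset L ->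
            P L (mulF (nmG L (H1 :^ g1^-1)%g (conjG g1 H1 (resG H1 a)))
                      (nmG L (H2 :^ g2^-1)%g (conjG g2 H2 (resG H2 b))))) ->
         P K1 a \/ P K2 b)].

Definition subgroup_family (G : {set gT}) (F : {set {set gT}}) : Prop :=
  [/\ F != set0,
      (forall I, I \in F -> subgrp G I),
      (forall I g, I \in F -> g \in G -> (I :^ g)%g \in F) &
      (forall I J, I \in F -> group_set J -> J \subset I -> J \in F)].

End Ghost.

(* Main.v *)
Require Import Defs.
From mathcomp Require Import all_boot all_order all_algebra all_fingroup.
Local Open Scope ring_scope.

Lemma nm_val (gT : finGroupType) (N I J : {group gT}) (b : {ffun {set gT} -> int}) :
  I \subset N -> N \subset ('N(I))%g -> J \subset I -> b J = 1 ->
  nmG N J b I = 1.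
Proof.
move=> sIN nIN sJI bJ.
rewrite ffunE /subgrp groupP sIN /=.
apply: big1 => D /imsetP [g gN ->].
have gD : g \in (I * (g *: J))%g.
  by rewrite -[g]mul1g mem_mulg ?group1 // mul1g lcoset_refl.
case/mulsgP: (mem_repr _ gD) => i y iI yJ ->.
case/lcosetP: yJ => j jJ ->.
have rN : (i * (g * j))%g \in ('N(I))%g.
  apply: (subsetP nIN); rewrite !groupM //; first exact: (subsetP sIN).
  exact: (subsetP (subset_trans sJI sIN)).
by rewrite (normP rN) (setIidPr sJI).
Qed.

Lemma tr_val (gT : finGroupType) (G I : {group gT}) (e : {ffun {set gT} -> int}) :
  I \subset G -> e I = 1 -> (forall K, K != (I : {set gT}) -> e K = 0) ->
  trG G ('N_G(I))%g e I = 1.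
Proof.
move=> sIG eI eN.
rewrite ffunE /subgrp groupP sIG /=.
have sIN : I \subset ('N_G(I))%g by rewrite subsetI sIG normG.
rewrite (bigD1 (('N_G(I))%g : {set gT})) /=; last first.
  by apply/lcosetsP; exists 1%g; rewrite ?group1 ?lcoset1.
rewrite repr_group conjsg1 sIN eI big1 ?addr0 //.
move=> C /andP [/lcosetsP [x xG ->] neq].
have rC := mem_repr x (lcoset_refl ('N_G(I))%g x).
case: ifP => // _; apply: eN; apply/negP => /eqP /normP rNI.
have rG : repr (x *: 'N_G(I))%g \in G.
  case/lcosetP: rC => n nN ->; rewrite groupM //.
  by move: nN; rewrite in_setI => /andP [].
have rN : repr (x *: 'N_G(I))%g \in ('N_G(I))%g by rewrite in_setI rG.
move/lcoset_eqP: rC => rC.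
by move: neq; rewrite -rC lcoset_id // eqxx.
Qed.

Theorem lemma4p9 (gT : finGroupType) (G : {group gT})
    (P : {set gT} -> {ffun {set gT} -> int} -> Prop) (p : nat)
    (pI : {set gT} -> nat) :
  prime_tambara_ideal G P ->
  (prime p \/ p = 0%N) ->
  (forall a, Atilde (1%g : {set gT}) a -> (P (1%g : {set gT}) a <-> (p %| a (1%g : {set gT}))%Z)) ->
  (forall I, subgrp G I -> forall n : int,
      (exists a, P G a /\ a I = n) <-> (pI I %| n)%Z) ->
  (forall a, Atilde G a ->
      (P G a <-> (forall I, subgrp G I -> (pI I %| a I)%Z))) ->
  subgroup_family G [set I : {set gT} | subgrp G I & pI I != 1%N].
Proof.
move=> [[Hid Hres Htr Hnm Hconj] _ _] Hp H1 H4 H5.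
have sGG : subgrp G G by rewrite /subgrp groupP subxx.
have one : forall I, subgrp G I -> (exists a, P G a /\ a I = 1) -> pI I = 1%N.
  move=> I sI ex; apply/eqP; rewrite -dvdn1.
  by have := (H4 I sI 1).1 ex; rewrite dvdzE.
have get1 : forall I, subgrp G I -> pI I = 1%N -> exists a, P G a /\ a I = 1.
  by move=> I sI p1; apply: (H4 I sI 1).2; rewrite p1 dvdzE.
have key : forall I J, subgrp G I -> group_set J -> J \subset I ->
    pI J = 1%N -> pI I = 1%N.
  move=> I J sI gJ sJI pJ.
  case/andP: (sI) => gI sIG.
  pose IG : {group gT} := Group gI.
  pose JG : {group gT} := Group gJ.
  have sJ : subgrp G J by rewrite /subgrp gJ (subset_trans sJI sIG).
  have [a [Pa aJ]] := get1 J sJ pJ.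
  have sIN : (IG : {set gT}) \subset ('N_G(IG))%g by rewrite subsetI sIG normG.
  have sGN : subgrp G ('N_G(IG))%g by rewrite /subgrp groupP subsetIl.
  have sNJ : subgrp ('N_G(IG))%g J by rewrite /subgrp gJ (subset_trans sJI sIN).
  have PJ : P J (resG J a) := Hres _ _ _ sGG sJ Pa.
  have PN := Hnm _ _ _ sGN sNJ PJ.
  pose w : {ffun {set gT} -> int} :=
    [ffun K => if K == (I : {set gT}) then 1 else 0].
  have wA : Atilde ('N_G(IG))%g w.
    split.
      move=> K; rewrite ffunE; case: eqP => // -> /negP []; rewrite /subgrp gI.
      exact: sIN.
    move=> K h _ hN.
    have hNI : h \in ('N(I))%g by move: hN; rewrite in_setI => /andP [].
    rewrite !ffunE; case: (K =P I) => [->|KI]; first by rewrite (normP hNI) eqxx.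
    case: eqP => // KhI; case: KI.
    by rewrite -(conjsgK h K) KhI; apply/normP; rewrite groupV.
  case: (Hid _ sGN) => _ _ _ _ Hmul.
  have PE := Hmul _ _ wA PN.
  have PT := Htr _ _ _ sGG sGN PE.
  apply: (one I sI); exists (trG G ('N_G(IG))%g (mulF w (nmG ('N_G(IG))%g J (resG J a)))).
  split => //.
  apply: (@tr_val gT G IG) => //.
    rewrite /mulF ffunE /w ffunE eqxx GRing.mul1r.
    apply: (@nm_val gT 'N_G(IG)%G IG JG) => //.
      exact: subsetIr.
    by rewrite ffunE /subgrp gJ subxx.
  by move=> K KI; rewrite !ffunE (negbTE KI) GRing.mul0r.
split.
- apply/set0Pn; exists 1%g; rewrite inE.
  have s1 : subgrp G 1%g by rewrite /subgrp groupP sub1G.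
  rewrite s1 /=; apply/eqP => p1.
  have [a [Pa a1]] := get1 _ s1 p1.
  have s11 : subgrp G (1%g : {set gT}) := s1.
  have P1 : P 1%g (resG 1%g a) := Hres _ _ _ sGG s1 Pa.
  case: (Hid _ s1) => HA _ _ _ _.
  have := (H1 _ (HA _ P1)).1 P1.
  rewrite ffunE /subgrp groupP subxx a1 dvdzE /= dvdn1 => /eqP p1'.
  by case: Hp => [|]; rewrite p1'.
- by move=> I; rewrite inE => /andP [].
- move=> I g; rewrite !inE => /andP [sI pIne] gG.
  case/andP: (sI) => gI sIG.
  have sIg : subgrp G (I :^ g)%g .
    rewrite /subgrp (groupP ((Group gI) :^ g)%G) /=.
    by rewrite -(conjGid gG) conjSg.
  rewrite sIg /=; apply: contra pIne => /eqP p1.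
  have [a [Pa a1]] := get1 _ sIg p1.
  case: (Hid _ sGG) => HA _ _ _ _.
  apply/eqP; apply: (one I sI); exists a; split => //.
  by rewrite -((HA _ Pa).2 I g sI gG).
- move=> I J; rewrite !inE => /andP [sI pIne] gJ sJI.
  case/andP: (sI) => gI sIG.
  rewrite /subgrp gJ (subset_trans sJI sIG) /=.
  by apply: contra pIne => /eqP pJ; apply/eqP; apply: (key I J).
Qed.
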